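(* If $K$ is a compact subset of $\mathfrak S_1(\mathbb T)$, then $$\lim_{\varepsilon\to0}\sup_{S\in K}d\big(S(\varepsilon),\mathbf 1\big)=0.$$
   Context: Rigged sets: each point has a multiplicity in $\{0,1,\dots,\infty\}$; an enumeration lists each point according to its multiplicity. $\mathfrak S_1(\mathbb T)$ is the set of countable rigged subsets of the unit circle $\mathbb T$ (arc-length metric) in which $1$ has infinite multiplicity, with no other accumulation point and with $d(S,\mathbf 1)<\infty$, where $d(S,T)=\inf\sum_j\mathrm{dist}(s_j,t_j)$ over enumerations and $\mathbf 1$ is $1$ with infinite multiplicity. For $S\in\mathfrak S_1(\mathbb T)$ and $\varepsilon>0$, $S(\varepsilon)$ is the rigged set of points of $S$ (with their multiplicities) at distance less than $\varepsilon$ from $1$. *)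

(* Defs.v *)
From HB Require Import structures.
From mathcomp Require Import all_boot all_order all_algebra.
From mathcomp Require Import all_classical all_reals all_analysis.
Set Implicit Arguments. Unset Strict Implicit. Unset Printing Implicit Defensive.
Import Order.TTheory GRing.Theory Num.Theory.
Import numFieldNormedType.Exports.
Local Open Scope classical_set_scope.
Local Open Scope ring_scope.
Local Open Scope card_scope.

Section RiggedCircle.
Variable R : realType.

(* The unit circle T, a point e^{i x} represented by its angle x in (-pi, pi];
   the point 1 corresponds to the angle 0. *)
Definition circ := {x : R | (- pi < x) && (x <= pi)}.

Definition arcdist (x y : circ) : R :=
  Num.min `|sval x - sval y| (2 * pi - `|sval x - sval y|).

Lemma circ1_proof : (- (pi : R) < 0) && (0 <= (pi : R)).
Proof. by rewrite oppr_lt0 pi_gt0 ltW // pi_gt0. Qed.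

Definition circ1 : circ := exist _ 0 circ1_proof.

(* A rigged subset of T: a multiplicity in {0,1,...,oo} for each point;
   [None] stands for infinite multiplicity. *)
Definition rigged := circ -> option nat.

Definition support (S : rigged) : set circ := [set x | S x != Some 0%N].

Definition lists_with_mult (s : nat -> circ) (x : circ) (m : option nat) : Prop :=
  match m with
  | Some n => [set j | s j = x] #= `I_n
  | None => infinite_set [set j | s j = x]
  end.

Definition enumeration (S : rigged) (s : nat -> circ) : Prop :=
  forall x, lists_with_mult s x (S x).

Definition rdist (S T : rigged) : \bar R :=
  ereal_inf [set r | exists s t, enumeration S s /\ enumeration T t /\
                     r = (\sum_(0 <= j <oo) (arcdist (s j) (t j))%:E)%E].

Definition one_rig : rigged := fun x => if x == circ1 then None else Some 0%N.

Definition acc_pt (A : set circ) (x : circ) : Prop :=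
  forall r : R, 0 < r -> exists y, A y /\ y <> x /\ arcdist x y < r.

Definition S1 (S : rigged) : Prop :=
  [/\ countable (support S),
      S circ1 = None,
      (forall x, x <> circ1 -> S x <> None /\ ~ acc_pt (support S) x) &
      (rdist S one_rig < +oo)%E].

Definition restr (S : rigged) (eps : R) : rigged :=
  fun x => if arcdist x circ1 < eps then S x else Some 0%N.

Definition S1_open (U : set rigged) : Prop :=
  forall S, S1 S -> U S ->
    exists2 r : R, 0 < r & forall T, S1 T -> (rdist S T < r%:E)%E -> U T.

Definition S1_compact (K : set rigged) : Prop :=
  K `<=` S1 /\
  forall (I : Type) (U : I -> set rigged),
    (forall i, S1_open (U i)) -> K `<=` \bigcup_i U i ->
    exists2 F : set I, finite_set F & K `<=` \bigcup_(i in F) U i.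

End RiggedCircle.

(* Main.v *)
Require Import Defs.
From HB Require Import structures.
From mathcomp Require Import all_boot all_order all_algebra.
From mathcomp Require Import all_classical all_reals all_analysis.
From mathcomp Require Import lra.
Import Order.TTheory GRing.Theory Num.Theory.
Local Open Scope classical_set_scope.
Local Open Scope ring_scope.

Set Implicit Arguments. Unset Strict Implicit.
Section Aux.
Variable R : realType.

Implicit Types x y z : circ R.

Lemma circ_bnd x : - pi < sval x /\ sval x <= pi.
Proof. by case: x => v /= /andP[]. Qed.

Lemma tri_real (p a b c : R) : 0 < p -> -p < a <= p -> -p < b <= p -> -p < c <= p ->
  Num.min `|a - c| (2 * p - `|a - c|) <=
  Num.min `|a - b| (2 * p - `|a - b|) + Num.min `|b - c| (2 * p - `|b - c|).
Proof.
move=> p0 /andP[a1 a2] /andP[b1 b2] /andP[c1 c2].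
rewrite !minEle.
case: (leP `|a - c| _) => q1; case: (leP `|a - b| _) => q2; case: (leP `|b - c| _) => q3;
move: q1 q2 q3;
case: (ger0P (a - c)) => h1; case: (ger0P (a - b)) => h2; case: (ger0P (b - c)) => h3.
all: move=> *; lra.
Qed.

Lemma arcdist_tri x y z : arcdist x z <= arcdist x y + arcdist y z.
Proof.
rewrite /arcdist; have := circ_bnd x; have := circ_bnd y; have := circ_bnd z.
move=> [? ?] [? ?] [? ?]; apply: tri_real; first exact: pi_gt0.
all: by apply/andP.
Qed.

Lemma arcdistC x y : arcdist x y = arcdist y x.
Proof. by rewrite /arcdist distrC. Qed.

Lemma arcdist_ge0 x y : 0 <= arcdist x y.
Proof.
rewrite /arcdist; have := circ_bnd x; have := circ_bnd y; have := @pi_gt0 R.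
move=> ? [? ?] [? ?]; rewrite minEle.
case: (ger0P (sval x - sval y)) => h; [case: (leP (sval x - sval y) _)|case: (leP (- (sval x - sval y)) _)] => ?; lra.
Qed.

Lemma arcdistxx x : arcdist x x = 0.
Proof.
rewrite /arcdist subrr normr0 subr0; have := @pi_gt0 R => ?.
rewrite minEle; case: (leP 0 _) => ?; lra.
Qed.


Lemma fiber_eq (S : rigged R) s s0 x : enumeration S s -> enumeration S s0 ->
  ([set j | s0 j = x] #= [set j | s j = x])%card.
Proof.
move=> /(_ x) + /(_ x); rewrite /lists_with_mult; case: (S x) => [n|] h1 h2.
  by apply: card_eq_trans h2 _; rewrite card_eq_sym.
have cnt (A : set nat) : countable A by apply: subset_card_le.
apply: card_eq_trans (eq_card_nat (cnt _) h2) _.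
by rewrite card_eq_sym; apply: eq_card_nat.
Qed.

Lemma realign (S : rigged R) s s0 : enumeration S s -> enumeration S s0 ->
  exists pi : nat -> nat, set_bij setT setT pi /\ forall j, s (pi j) = s0 j.
Proof.
move=> es es0.
have : forall x, exists f : nat -> nat,
    set_bij [set j | s0 j = x] [set j | s j = x] f.
  by move=> x; apply/card_set_bijP; apply: fiber_eq es es0.
move=> /choice[F HF].
exists (fun j => F (s0 j) j).
have key j : s (F (s0 j) j) = s0 j.
  by have [+ _ _] := HF (s0 j); apply.
split=> //; rewrite /set_bij; split.
- by [].
- move=> i j _ _ /= eq.
  have := key i; rewrite eq key => E.
  rewrite E in eq.
  have [_ + _] := HF (s0 i); apply => //; rewrite /= ?inE //.
- move=> m _; have [_ _ +] := HF (s m).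
  move=> /(_ m erefl) [j /= jE <-].
  by exists j => //; rewrite jE.
Qed.

Lemma series_inv (S : rigged R) s s0 (g : circ R -> R) :
  (forall x, 0 <= g x) -> enumeration S s -> enumeration S s0 ->
  (\sum_(j <oo) (g (s j))%:E = \sum_(j <oo) (g (s0 j))%:E)%E.
Proof.
move=> g0 es es0; have [pi [bij key]] := @realign S s s0 es es0.
rewrite !nneseries_esumT.
rewrite (@reindex_esum R _ _ setT setT pi (fun j => (g (s j))%:E) bij).
- by congr esum; apply/funext => j; rewrite /= key.
- by move=> n; rewrite lee_fin.
- by move=> n; rewrite lee_fin.
Qed.

Definition d1 (x : circ R) := arcdist x (circ1 R).
Definition gr (r : R) (x : circ R) := if d1 x < r then d1 x else 0.
Definition mm (t : nat -> circ R) (r : R) : \bar R := (\sum_(j <oo) (gr r (t j))%:E)%E.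

Lemma d1_ge0 x : 0 <= d1 x. Proof. exact: arcdist_ge0. Qed.
Lemma gr_ge0 r x : 0 <= gr r x.
Proof. by rewrite /gr; case: ifP => // _; exact: d1_ge0. Qed.
Lemma gr_le r x : gr r x <= d1 x.
Proof. by rewrite /gr; case: ifP => // _; exact: d1_ge0. Qed.
Lemma gr_mono r1 r2 x : r1 <= r2 -> gr r1 x <= gr r2 x.
Proof.
move=> le; rewrite /gr; case: ifP => h1.
  by rewrite (lt_le_trans h1 le).
by case: ifP => _ //; exact: d1_ge0.
Qed.

Lemma key_pt (eps eta : R) x y : 0 < eta -> 0 <= eps ->
  gr eps x <= (1 + eps / eta) * arcdist x y + gr (eps + eta) y.
Proof.
move=> eta0 eps0.
have a0 := arcdist_ge0 x y.
have k0 : 0 <= eps / eta by rewrite divr_ge0 // ltW.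
have g0 := gr_ge0 (eps + eta) y.
rewrite /gr; case: (ltP (d1 x) eps) => hx; last first.
  by apply: addr_ge0 => //; apply: mulr_ge0 => //; lra.
have t1 : d1 x <= arcdist x y + d1 y by apply: arcdist_tri.
have t2 : d1 y <= arcdist y x + d1 x by apply: arcdist_tri.
rewrite arcdistC in t2.
have hk : eps / eta * eta = eps by rewrite divfK // gt_eqF.
case: (ltP (d1 y) (eps + eta)) => hy.
  nra.
nra.
Qed.

Lemma key_series (eps eta : R) (s t : nat -> circ R) : 0 < eta -> 0 <= eps ->
  (mm s eps <= (1 + eps / eta)%:E * (\sum_(j <oo) (arcdist (s j) (t j))%:E)
               + mm t (eps + eta))%E.
Proof.
move=> eta0 eps0.
have k0 : 0 <= 1 + eps / eta by rewrite addr_ge0 // divr_ge0 // ltW.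
rewrite /mm -nneseriesZl; last by move=> i _; rewrite lee_fin arcdist_ge0.
rewrite -nneseriesD; last 2 first.
- by move=> i _ _; rewrite -EFinM lee_fin mulr_ge0 // arcdist_ge0.
- by move=> i _ _; rewrite lee_fin gr_ge0.
apply: lee_nneseries; first by move=> i _ _; rewrite lee_fin gr_ge0.
by move=> n _; rewrite -EFinM -EFinD lee_fin key_pt.
Qed.


Definition hh (n : nat) : R := (n.+1%:R)^-1.
Definition UU (e : R) (n : nat) : set (rigged R) :=
  [set T | exists t, enumeration T t /\ exists2 r, hh n < r & (mm t r < e%:E)%E].

Lemma mm_ge0 (t : nat -> circ R) (r : R) : (0 <= mm t r)%E.
Proof. by apply: nneseries_ge0 => i _ _; rewrite lee_fin gr_ge0. Qed.

Lemma UU_open e n : S1_open (UU e n).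
Proof.
move=> T _ [t0 [et0 [r hr mlt]]].
have hn0 : 0 < hh n by rewrite /hh invr_gt0 ltr0n.
set eta := (r - hh n) / 2.
have eta0 : 0 < eta by rewrite /eta; lra.
have cfin : mm t0 r \is a fin_num by rewrite ge0_fin_numE ?mm_ge0 // (lt_trans mlt) // ltry.
set c := fine (mm t0 r).
have cE : mm t0 r = c%:E by rewrite fineK.
have clt : c < e by rewrite -lte_fin -cE.
have c0 : 0 <= c by rewrite -lee_fin -cE mm_ge0.
have re0 : 0 <= r - eta by rewrite /eta; lra.
set k := 1 + (r - eta) / eta.
have k0 : 0 < k.
  have : 0 <= (r - eta) / eta by rewrite divr_ge0 // ltW.
  by rewrite /k => ?; lra.
exists ((e - c) / k); first by rewrite divr_gt0 // subr_gt0.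
move=> T' _ /ereal_inf_lt [_ [t [t' [et [et' ->]]]] Dlt].
exists t'; split => //; exists (r - eta); first by rewrite /eta; lra.
have := key_series t' t eta0 re0.
rewrite subrK.
have -> : mm t r = mm t0 r := series_inv (gr_ge0 r) et et0.
rewrite cE.
have -> : (\sum_(j <oo) (arcdist (t' j) (t j))%:E = 
          \sum_(j <oo) (arcdist (t j) (t' j))%:E)%E.
  by apply: eq_eseriesr => j _; rewrite arcdistC.
set D := (\sum_(j <oo) _)%E in Dlt *.
have D0 : (0 <= D)%E by apply: nneseries_ge0 => i _ _; rewrite lee_fin arcdist_ge0.
have Dfin : D \is a fin_num by rewrite ge0_fin_numE // (lt_trans Dlt) // ltry.
rewrite -(fineK Dfin) in Dlt *.
rewrite lte_fin in Dlt.
move=> /le_lt_trans; apply.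
rewrite -EFinM -EFinD lte_fin.
rewrite ltr_pdivlMr // in Dlt.
rewrite -/k (mulrC k); lra.
Qed.


Lemma small_rho (s : nat -> circ R) n : exists2 rho : R, 0 < rho &
  forall j, (j < n)%N -> gr rho (s j) = 0.
Proof.
elim: n => [|n [rho rho0 IH]]; first by exists 1.
exists (Num.min rho (if 0 < d1 (s n) then d1 (s n) else 1)).
  by rewrite lt_min rho0 /=; case: ifPn => // _; exact: ltr01.
move=> j; rewrite ltnS leq_eqVlt => /orP[/eqP ->|jn].
  have := d1_ge0 (s n); rewrite le_eqVlt => /orP[/eqP h|h].
    apply/eqP; rewrite eq_le gr_ge0 andbT; rewrite h; exact: gr_le.
  by rewrite /gr h /= ltNge ge_min lexx orbT.
apply/eqP; rewrite eq_le gr_ge0 andbT -(IH j jn); apply: gr_mono.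
by rewrite ge_min lexx.
Qed.

Lemma tail_small (a : nat -> R) (e : R) : 0 < e -> (forall j, 0 <= a j) ->
  (\sum_(j <oo) (a j)%:E < +oo)%E ->
  exists n, (\sum_(n <= j <oo) (a j)%:E < e%:E)%E.
Proof.
move=> e0 a0 fin.
set L := (\sum_(j <oo) (a j)%:E)%E in fin.
have L0 : (0 <= L)%E by apply: nneseries_ge0 => i _ _; rewrite lee_fin.
have Lfin : L \is a fin_num by rewrite ge0_fin_numE.
have homo : {homo (fun n => \sum_(0 <= j < n) (a j)%:E) : i j / (i <= j)%N >-> (i <= j)%E}.
  by apply: lee_sum_nneg_natr => k _ _; rewrite lee_fin.
have cv := ereal_nondecreasing_cvgn homo.
have LE : L = ereal_sup (range (fun n => \sum_(0 <= j < n) (a j)%:E)).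
  by rewrite /L; apply: cvg_lim.
have Lfin' := Lfin; rewrite LE in Lfin'.
have [_ [n _ <-] lt] := ub_ereal_sup_adherent e0 Lfin'.
rewrite -LE in lt.
exists n.
have := @nneseries_split R (fun j => (a j)%:E) 0 n (fun k _ => a0 k : (0 <= (a k)%:E)%E).
rewrite add0n -/L => Ls.
rewrite sumEFin in Ls lt.
set T := (\sum_(n <= k <oo) (a k)%:E)%E in Ls *.
have Tfin : T \is a fin_num by move: Lfin; rewrite Ls fin_numD => /andP[].
rewrite Ls -(fineK Tfin) in lt; rewrite -(fineK Tfin) lte_fin.
rewrite -EFinN -!EFinD lte_fin in lt.
lra.
Qed.

Lemma cover_one (S : rigged R) (e : R) : 0 < e -> S1 S -> exists n, UU e n S.
Proof.
move=> e0 [_ _ _ fin].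
have [_ [s [u [es [eu ->]]]] lt] := ereal_inf_lt fin.
have uE j : u j = circ1 R.
  apply/eqP; apply: contraT => ne.
  have := eu (u j); rewrite /lists_with_mult /one_rig (negbTE ne) II0 card_eq0 => /eqP h.
  have : [set j0 | u j0 = u j] j by [].
  by rewrite h.
have fin' : (\sum_(j <oo) (d1 (s j))%:E < +oo)%E.
  suff <- : (\sum_(j<oo) (arcdist (s j) (u j))%:E = \sum_(j <oo) (d1 (s j))%:E)%E by [].
  by apply: eq_eseriesr => j _; rewrite uE.
have [n tl] := tail_small e0 (fun j => d1_ge0 (s j)) fin'.
have [rho rho0 hz] := small_rho s n.
have mlt : (mm s rho < e%:E)%E.
  rewrite /mm (@nneseries_split R (fun j => (gr rho (s j))%:E) 0 n); last first.
    by move=> k _; rewrite lee_fin gr_ge0.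
  rewrite add0n big1_seq ?add0e; last first.
    by move=> k /andP[_]; rewrite mem_index_iota => /andP[_ kn]; rewrite hz.
  apply: le_lt_trans tl; apply: lee_nneseries.
    by move=> k _ _; rewrite lee_fin gr_ge0.
  by move=> k _; rewrite lee_fin gr_le.
exists (Num.Def.trunc rho^-1); exists s; split => //; exists rho => //.
by rewrite /hh invf_plt ?posrE ?ltr0n // truncnS_gt.
Qed.


Lemma enum_one : enumeration (@one_rig R) (fun _ => circ1 R).
Proof.
move=> x; rewrite /lists_with_mult /one_rig; case: eqP => [->|ne].
  have -> : [set j : nat | circ1 R = circ1 R] = setT by apply/seteqP; split.
  exact: infinite_nat.
rewrite II0 card_eq0; apply/eqP/seteqP; split => j //= h.
by exfalso; apply: ne.
Qed.

Lemma enum_restr (S : rigged R) s eps : 0 < eps -> S (circ1 R) = None ->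
  enumeration S s ->
  enumeration (restr S eps) (fun j => if d1 (s j) < eps then s j else circ1 R).
Proof.
move=> eps0 S1N es x; rewrite /lists_with_mult /restr.
have d10 : d1 (circ1 R) = 0 by rewrite /d1 arcdistxx.
case: ifPn => hx.
  have [->|ne] := eqVneq x (circ1 R).
    have := es (circ1 R); rewrite /lists_with_mult S1N => inf.
    apply: sub_infinite_set inf => j /= sj.
    by rewrite sj; case: ifP.
  have -> : [set j | (if d1 (s j) < eps then s j else circ1 R) = x] =
            [set j | s j = x].
    apply/seteqP; split => j /=.
      by case: ifP => // _ h; rewrite h eqxx in ne.
    by move=> sj; rewrite sj; rewrite /d1 hx.
  exact: es.
rewrite II0 card_eq0; apply/eqP/seteqP; split => j //=.
case: ifPn => h sj.
  by rewrite -sj in hx; rewrite /d1 in h; rewrite h in hx.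
by rewrite -sj -/(d1 _) d10 eps0 in hx.
Qed.

Lemma main_aux (K : set (rigged R)) :
  S1_compact K ->
  forall e : R, 0 < e ->
    exists2 delta : R, 0 < delta &
      forall eps : R, 0 < eps -> eps < delta ->
        (ereal_sup [set rdist (restr S eps) (@one_rig R) | S in K] <= e%:E)%E.
Proof.
move=> [KS1 cpt] e e0.
have cov : K `<=` \bigcup_n UU e n.
  by move=> S KS; have [n h] := cover_one e0 (KS1 _ KS); exists n.
have [F finF KF] := cpt nat (UU e) (fun n => UU_open (e:=e) (n:=n)) cov.
set N := (\max_(i <- finmap.enum_fset (fset_set F)) i)%N.
have FN i : F i -> (i <= N)%N.
  move=> Fi; apply: leq_bigmax_seq => //; rewrite in_fset_set //; exact: mem_set.
exists (hh N); first by rewrite /hh invr_gt0 ltr0n.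
move=> eps eps0 epsN; apply: ge_ereal_sup => _ [S KS <-].
have [i Fi [s [es [rho hr mlt]]]] := KF S KS.
have epsrho : eps < rho.
  apply: (lt_trans epsN); apply: le_lt_trans hr.
  by rewrite /hh lef_pV2 ?posrE ?ltr0n // ler_nat ltnS FN.
have [_ S1N _ _] := KS1 _ KS.
apply: le_trans (ereal_inf_lbound _) _.
  by exists (fun j => if d1 (s j) < eps then s j else circ1 R), (fun _ => circ1 R);
     split; [exact: enum_restr|split; [exact: enum_one|]].
apply: le_trans (ltW mlt); rewrite /mm.
apply: lee_nneseries; first by move=> k _ _; rewrite lee_fin arcdist_ge0.
move=> k _; rewrite lee_fin; case: ifPn => h.
  by rewrite /gr (lt_trans h epsrho).
by rewrite arcdistxx gr_ge0.
Qed.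
End Aux.
Unset Implicit Arguments.

Theorem mainTheorem14 (R : realType) (K : set (rigged R)) :
  S1_compact K ->
  forall e : R, 0 < e ->
    exists2 delta : R, 0 < delta &
      forall eps : R, 0 < eps -> eps < delta ->
        (ereal_sup [set rdist (restr S eps) (@one_rig R) | S in K] <= e%:E)%E.
Proof. exact: main_aux. Qed.
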